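(* Let $\mathcal{Q}(z)=t(z)^2-\det\mathcal{T}(z)$ and $\lambda=z^2+z^{-2}$. Then $\mathcal{Q}(z)=\mathcal{Q}_{2N}(\lambda)$ where $\mathcal{Q}_{2N}$ is a polynomial of degree $2N$ in $\lambda$ (whose coefficients are functions on the phase space $M_{2N}$).
   Context: $SL_2^*$ denotes the Poisson variety with coordinate ring $\mathbf{C}[e,f,k^{\pm1}]$ and Poisson brackets $\{k,e\}=ke$, $\{k,f\}=-kf$, $\{e,f\}=2(k^2-k^{-2})$; $\omega=k^2+k^{-2}+ef$ is a Casimir and $\Sigma_t=\{\omega=t\}$ is a symplectic leaf. Fix $N\ge1$, $t_1,\dots,t_N\in\mathbf{C}$, $\xi\in\mathbf{C}^*$, $a_1,\dots,a_N\in\mathbf{C}^*$. The phase space is $M_{2N}=\Sigma_{t_1}\times\cdots\times\Sigma_{t_N}$ with coordinates $(e_j,f_j,k_j)$ at site $j$. Set $L_j(z)=\begin{pmatrix} zk_j-z^{-1}k_j^{-1} & e_j\\ f_j & zk_j^{-1}-z^{-1}k_j\end{pmatrix}$, $K(z)=\begin{pmatrix}\xi z-z^{-1}\xi^{-1}&0\\0&\xi z^{-1}-z\xi^{-1}\end{pmatrix}$, the reflection monodromy matrix $\mathcal{T}(z)=\frac{1}{z-z^{-1}}L_1(a_1z)\cdots L_N(a_Nz)\,K(z)\,L_N(z/a_N)\cdots L_1(z/a_1)$, and $t(z)=\frac12\operatorname{tr}\mathcal{T}(z)$. *)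

(* Defs.v *)
(* Complex numbers: an arbitrary numClosedFieldType C
   (e.g. algC or complex R); the statement is a polynomial identity. *)
From HB Require Import structures.
From mathcomp Require Import all_boot all_order all_algebra.
Set Implicit Arguments. Unset Strict Implicit. Unset Printing Implicit Defensive.
Import Order.TTheory GRing.Theory Num.Theory.
Local Open Scope ring_scope.

Section Defs.
Variable C : numClosedFieldType.

Definition Lmat (e f k z : C) : 'M[C]_2 :=
  \matrix_(i < 2, j < 2)
    if (i == 0) && (j == 0) then z * k - z^-1 * k^-1
    else if (i == 0) && (j == 1) then e
    else if (i == 1) && (j == 0) then f
    else z * k^-1 - z^-1 * k.

Definition Kmat (xi z : C) : 'M[C]_2 :=
  \matrix_(i < 2, j < 2)
    if (i == 0) && (j == 0) then xi * z - z^-1 * xi^-1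
    else if (i == 1) && (j == 1) then xi * z^-1 - z * xi^-1
    else 0.

Definition Tmono (N : nat) (xi : C) (a e f k : 'I_N -> C) (z : C) : 'M[C]_2 :=
  (z - z^-1)^-1 *:
   ((\prod_(j < N) Lmat (e j) (f j) (k j) (a j * z)) *
    Kmat xi z *
    (\prod_(j < N) Lmat (e (rev_ord j)) (f (rev_ord j)) (k (rev_ord j))
                         (z / a (rev_ord j)))).

Definition tfun (N : nat) (xi : C) (a e f k : 'I_N -> C) (z : C) : C :=
  \tr (Tmono xi a e f k z) / 2.

Definition Qfun (N : nat) (xi : C) (a e f k : 'I_N -> C) (z : C) : C :=
  tfun xi a e f k z ^+ 2 - \det (Tmono xi a e f k z).

End Defs.

(* Main.v *)
Require Import Defs.
From HB Require Import structures.
From mathcomp Require Import all_boot all_order all_algebra.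
From mathcomp Require Import ring zify.
Import Order.TTheory GRing.Theory Num.Theory.
Local Open Scope ring_scope.

Section S.
Variable C : numClosedFieldType.
Lemma mul22 (A B : 'M[C]_2) : A * B = \matrix_(i, j) (A i 0 * B 0 j + A i 1 * B 1 j).
Proof.
apply/matrixP => i j; rewrite !mxE !big_ord_recl big_ord0 addr0.
have -> : lift ord0 ord0 = 1 :> 'I_2 by apply/val_inj.
by have -> : ord0 = 0 :> 'I_2 by apply/val_inj.
Qed.

Definition lam (z : C) := z ^+ 2 + z ^- 2.
Definition mform (al be b c : {poly C}) (z : C) : 'M[C]_2 :=
  \matrix_(i < 2, j < 2)
   if (i == 0) && (j == 0) then z * al.[lam z] + z^-1 * be.[lam z]
   else if (i == 0) && (j == 1) then (z ^+ 2 - z ^- 2) * b.[lam z]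
   else if (i == 1) && (j == 0) then (z ^+ 2 - z ^- 2) * c.[lam z]
   else z^-1 * al.[lam z] + z * be.[lam z].

Definition alN (a e f k : C) (al be b c : {poly C}) : {poly C} :=
  'X * (k ^+ 2 *: al + (e * k / a) *: c + (f * a * k) *: b)
  + ((k ^+ 2 - k ^- 2 + e * f) *: be - (a ^+ 2 + a ^- 2) *: al
     - (2 * e * a / k) *: c - (2 * f / (a * k)) *: b).
Definition beN (a e f k : C) (al be b c : {poly C}) : {poly C} :=
  'X * (k ^- 2 *: be + (e * a / k) *: c + (f / (a * k)) *: b)
  + ((k ^- 2 - k ^+ 2 + e * f) *: al - (a ^+ 2 + a ^- 2) *: be
     - (2 * e * k / a) *: c - (2 * f * a * k) *: b).
Definition bN (a e f k : C) (al be b c : {poly C}) : {poly C} :=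
  'X * b + ((e * a * k) *: al + (e / (a * k)) *: be + (e ^+ 2) *: c
            - (a ^+ 2 * k ^+ 2 + a ^- 2 * k ^- 2) *: b).
Definition cN (a e f k : C) (al be b c : {poly C}) : {poly C} :=
  'X * c + ((f * k / a) *: al + (f * a / k) *: be + (f ^+ 2) *: b
            - (a ^+ 2 * k ^- 2 + a ^- 2 * k ^+ 2) *: c).

Lemma ord2 (i : 'I_2) : i = 0 \/ i = 1.
Proof. case: i => [[|[|i]] Hi]; [left; exact/val_inj|right; exact/val_inj|done]. Qed.

Lemma m00 (A B : 'M[C]_2) : (A * B) 0 0 = A 0 0 * B 0 0 + A 0 1 * B 1 0.
Proof. by rewrite mul22 mxE. Qed.
Lemma m01 (A B : 'M[C]_2) : (A * B) 0 1 = A 0 0 * B 0 1 + A 0 1 * B 1 1.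
Proof. by rewrite mul22 mxE. Qed.
Lemma m10 (A B : 'M[C]_2) : (A * B) 1 0 = A 1 0 * B 0 0 + A 1 1 * B 1 0.
Proof. by rewrite mul22 mxE. Qed.
Lemma m11 (A B : 'M[C]_2) : (A * B) 1 1 = A 1 0 * B 0 1 + A 1 1 * B 1 1.
Proof. by rewrite mul22 mxE. Qed.

Lemma L00 e f k z : Lmat e f k z 0 0 = z * k - z^-1 * k^-1 :> C.
Proof. by rewrite mxE. Qed.
Lemma L01 e f k z : Lmat e f k z 0 1 = e :> C.
Proof. by rewrite mxE. Qed.
Lemma L10 e f k z : Lmat e f k z 1 0 = f :> C.
Proof. by rewrite mxE. Qed.
Lemma L11 e f k z : Lmat e f k z 1 1 = z * k^-1 - z^-1 * k :> C.
Proof. by rewrite mxE. Qed.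
Lemma F00 al be b c z : mform al be b c z 0 0 = z * al.[lam z] + z^-1 * be.[lam z].
Proof. by rewrite mxE. Qed.
Lemma F01 al be b c z : mform al be b c z 0 1 = (z ^+ 2 - z ^- 2) * b.[lam z].
Proof. by rewrite mxE. Qed.
Lemma F10 al be b c z : mform al be b c z 1 0 = (z ^+ 2 - z ^- 2) * c.[lam z].
Proof. by rewrite mxE. Qed.
Lemma F11 al be b c z : mform al be b c z 1 1 = z^-1 * al.[lam z] + z * be.[lam z].
Proof. by rewrite mxE. Qed.

Lemma step_eq (a e f k : C) al be b c z : a != 0 -> k != 0 -> z != 0 ->
  Lmat e f k (a * z) * mform al be b c z * Lmat e f k (z / a) =
  mform (alN a e f k al be b c) (beN a e f k al be b c)
        (bN a e f k al be b c) (cN a e f k al be b c) z.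
Proof.
move=> ha hk hz; apply/matrixP => i j.
case: (ord2 i) => ->; case: (ord2 j) => ->;
rewrite ?(m00, m01, m10, m11) ?(L00, L01, L10, L11) ?(F00, F01, F10, F11)
  /alN /beN /bN /cN /lam !(hornerD, hornerN, hornerZ, hornerM, hornerX);
 field; by rewrite ha hk hz.
Qed.

Lemma det2 (A : 'M[C]_2) : \det A = A 0 0 * A 1 1 - A 0 1 * A 1 0.
Proof.
rewrite (expand_det_row _ 0) !big_ord_recl big_ord0 addr0 /cofactor !det_mx11 !mxE /=.
have -> : lift ord0 ord0 = 1 :> 'I_2 by apply/val_inj.
have -> : ord0 = 0 :> 'I_2 by apply/val_inj.
set x := lift 1 _; have -> : x = 0 by apply/val_inj.
rewrite -[(0 + 0)%N]/0%N -[(0 + bump 0 0)%N]/1%N.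
by rewrite expr0 expr1 !mul1r mulN1r mulrN.
Qed.
Lemma tr2 (A : 'M[C]_2) : \tr A = A 0 0 + A 1 1.
Proof.
rewrite /mxtrace !big_ord_recl big_ord0 addr0.
have -> : lift ord0 ord0 = 1 :> 'I_2 by apply/val_inj.
by have -> : ord0 = 0 :> 'I_2 by apply/val_inj.
Qed.

Lemma szZ (x : C) (p : {poly C}) m : (size p <= m)%N -> (size (x *: p) <= m)%N.
Proof. by move=> h; apply: leq_trans (size_scale_leq _ _) h. Qed.
Lemma szD (p q : {poly C}) m : (size p <= m)%N -> (size q <= m)%N -> (size (p + q)%R <= m)%N.
Proof. by move=> hp hq; apply: leq_trans (size_polyD _ _) _; rewrite geq_max hp. Qed.
Lemma szB (p q : {poly C}) m : (size p <= m)%N -> (size q <= m)%N -> (size (p - q)%R <= m)%N.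
Proof. by move=> hp hq; apply: szD => //; rewrite size_polyN. Qed.
Lemma szXM (p : {poly C}) m : (size p <= m)%N -> (size ('X * p)%R <= m.+1)%N.
Proof.
move=> h; rewrite mulrC; have [->|nz] := eqVneq p 0; first by rewrite mul0r size_poly0.
by rewrite size_mulX.
Qed.
Lemma cf0 (p : {poly C}) n : (size p <= n)%N -> p`_n = 0.
Proof. exact: nth_default. Qed.
Arguments cf0 {p n}.
Lemma lead_step (X0 R : {poly C}) m : (size X0 <= m.+1)%N -> (size R <= m.+1)%N ->
  (size ('X * X0 + R)%R <= m.+2)%N /\ ('X * X0 + R)`_m.+1 = X0`_m.
Proof.
move=> h1 h2; split; first by apply: szD => //; [exact: szXM | exact: leqW].
by rewrite coefD coefXM /= (cf0 h2) addr0.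
Qed.
Lemma leS n m : (n <= m)%N -> (n <= m.+1)%N. Proof. exact: leqW. Qed.
Arguments leS {n m}.

Definition inclass (n : nat) (M : C -> 'M[C]_2) (A B : C) :=
  exists al be b c : {poly C},
    [/\ (size al <= n.+1)%N /\ (size be <= n.+1)%N, (size b <= n)%N /\ (size c <= n)%N,
        al`_n = A, be`_n = B & forall z, z != 0 -> M z = mform al be b c z].

Lemma step_class n M A B (a e f k : C) : a != 0 -> k != 0 -> inclass n M A B ->
  inclass n.+1 (fun z => Lmat e f k (a * z) * M z * Lmat e f k (z / a))
     (k ^+ 2 * A) (k ^- 2 * B).
Proof.
move=> ha hk [al [be [b [c [[h1 h2] [h3 h4] h5 h6 h7]]]]].
have h3' := leS h3; have h4' := leS h4.
exists (alN a e f k al be b c), (beN a e f k al be b c),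
       (bN a e f k al be b c), (cN a e f k al be b c).
have [s1 c1] : (size (alN a e f k al be b c) <= n.+2)%N /\
     (alN a e f k al be b c)`_n.+1 = k ^+ 2 * A.
  have [] := @lead_step (k ^+ 2 *: al + (e * k / a) *: c + (f * a * k) *: b)
     ((k ^+ 2 - k ^- 2 + e * f) *: be - (a ^+ 2 + a ^- 2) *: al
     - (2 * e * a / k) *: c - (2 * f / (a * k)) *: b) n.
  - by repeat apply: szD; apply: szZ.
  - by repeat apply: szB; apply: szZ.
  move=> -> ->; split => //.
  by rewrite !coefD !coefZ (cf0 h3) (cf0 h4) !mulr0 !addr0 h5.
have [s2 c2] : (size (beN a e f k al be b c) <= n.+2)%N /\
     (beN a e f k al be b c)`_n.+1 = k ^- 2 * B.
  have [] := @lead_step (k ^- 2 *: be + (e * a / k) *: c + (f / (a * k)) *: b)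
     ((k ^- 2 - k ^+ 2 + e * f) *: al - (a ^+ 2 + a ^- 2) *: be
     - (2 * e * k / a) *: c - (2 * f * a * k) *: b) n.
  - by repeat apply: szD; apply: szZ.
  - by repeat apply: szB; apply: szZ.
  move=> -> ->; split => //.
  by rewrite !coefD !coefZ (cf0 h3) (cf0 h4) !mulr0 !addr0 h6.
split => //.
split.
- rewrite /bN; apply: szD; first exact: szXM.
  by apply: szB; [repeat apply: szD|]; apply: szZ.
- rewrite /cN; apply: szD; first exact: szXM.
  by apply: szB; [repeat apply: szD|]; apply: szZ.
- by move=> z hz; rewrite h7 // step_eq.
Qed.
Arguments step_class {n M A B a e f k}.

Definition Mcore (N : nat) (xi : C) (a e f k : 'I_N -> C) (z : C) : 'M[C]_2 :=
  (\prod_(j < N) Lmat (e j) (f j) (k j) (a j * z)) *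
    Kmat xi z *
    (\prod_(j < N) Lmat (e (rev_ord j)) (f (rev_ord j)) (k (rev_ord j))
                         (z / a (rev_ord j))).
Arguments Mcore {N}.

Lemma rev_rec N (G : 'I_N.+1 -> 'M[C]_2) :
  \prod_(j < N.+1) G (rev_ord j) = (\prod_(j < N) G (lift ord0 (rev_ord j))) * G ord0.
Proof.
have E : forall j : 'I_N, rev_ord (widen_ord (leqnSn N) j) = lift ord0 (rev_ord j).
  move=> j; apply/val_inj => /=; rewrite /bump /= add1n subSS subnSK //.
have E0 : rev_ord (@ord_max N) = ord0 by apply/val_inj => /=; rewrite subSS subnn.
rewrite big_ord_recr /= E0; congr (_ * _); apply: eq_bigr => j _; by rewrite E.
Qed.

Lemma Mcore_rec N xi (a e f k : 'I_N.+1 -> C) z :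
  Mcore xi a e f k z =
  Lmat (e ord0) (f ord0) (k ord0) (a ord0 * z) *
  Mcore xi (fun j => a (lift ord0 j)) (fun j => e (lift ord0 j))
           (fun j => f (lift ord0 j)) (fun j => k (lift ord0 j)) z *
  Lmat (e ord0) (f ord0) (k ord0) (z / a ord0).
Proof.
have := @rev_rec N (fun j => Lmat (e j) (f j) (k j) (z / a j)); rewrite /= => R.
by rewrite /Mcore big_ord_recl R !mulrA.
Qed.

Lemma inclass_ext n M M' A A' B B' : (forall z, z != 0 -> M z = M' z) -> A = A' -> B = B' ->
  inclass n M A B -> inclass n M' A' B'.
Proof.
move=> hM <- <- [al [be [b [c [hs1 hs2 h5 h6 h7]]]]].
exists al, be, b, c; split => // z hz; rewrite -hM //; exact: h7.
Qed.
Arguments inclass_ext {n M M' A A' B B'}.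

Lemma core_class xi N : forall a e f k : 'I_N -> C, (forall j, a j != 0) -> (forall j, k j != 0) ->
  inclass N (Mcore xi a e f k) (xi * (\prod_(j < N) k j) ^+ 2)
          (- (xi^-1 * (\prod_(j < N) k j) ^- 2)).
Proof.
elim: N => [|N IH] a e f k ha hk.
  exists xi%:P, (- xi^-1)%:P, 0, 0; split.
  - by rewrite !size_polyC_leq1.
  - by rewrite size_poly0.
  - by rewrite coefC big_ord0 expr1n mulr1.
  - by rewrite coefC big_ord0 expr1n invr1 mulr1.
  move=> z hz; rewrite /Mcore !big_ord0 mul1r mulr1.
  apply/matrixP => i j.
  case: (ord2 i) => ->; case: (ord2 j) => ->;
  rewrite ?(F00, F01, F10, F11) !hornerC ?mxE /=; rewrite ?mulr0 //; ring.
have := step_class (e := e ord0) (f := f ord0) (ha ord0) (hk ord0)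
  (IH (fun j => a (lift ord0 j)) (fun j => e (lift ord0 j)) (fun j => f (lift ord0 j))
      (fun j => k (lift ord0 j)) (fun j => ha (lift ord0 j)) (fun j => hk (lift ord0 j))).
move=> H; apply: (inclass_ext _ _ _ H).
- by move=> z hz; rewrite Mcore_rec.
- by rewrite big_ord_recl exprMn; ring.
- by rewrite big_ord_recl exprMn !expr2 !invfM; ring.
Qed.

Lemma coefM_top (p q : {poly C}) m n : (size p <= m.+1)%N -> (size q <= n.+1)%N ->
  (p * q)`_(m + n) = p`_m * q`_n.
Proof.
move=> hp hq; rewrite coefM.
have hm : (m < (m + n).+1)%N by rewrite ltnS leq_addr.
rewrite (bigD1 (Ordinal hm)) //= addKn big1 ?addr0 // => j /eqP ne.
case: (ltngtP j m) => h.
- by rewrite (@cf0 q) ?mulr0 //; apply: leq_trans hq _; rewrite ltn_subRL ltn_add2r.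
- by rewrite (@cf0 p) ?mul0r //; apply: leq_trans hp _.
- by case: ne; apply/val_inj.
Qed.
End S.


Theorem mainTheorem4 (C : numClosedFieldType) (N : nat)
    (tt : 'I_N -> C) (xi : C) (a : 'I_N -> C) (e f k : 'I_N -> C) :
  (0 < N)%N -> xi != 0 -> (forall j, a j != 0) ->
  (forall j, k j != 0) ->
  (forall j, k j ^+ 2 + (k j)^-2 + e j * f j = tt j) ->
  exists P : {poly C},
    [/\ (size P <= (2 * N).+1)%N,
        P`_(2 * N) = (xi * (\prod_(j < N) k j) ^+ 2
                      + xi^-1 * (\prod_(j < N) k j) ^- 2) ^+ 2 / 4
      & forall z : C, z != 0 -> z ^+ 2 != 1 ->
          Qfun xi a e f k z = P.[z ^+ 2 + z ^- 2]].
Proof.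
move=> hN hxi ha hk _.
have [al [be [b [c [[s1 s2] [s3 s4] c1 c2 hM]]]]] := @core_class C xi N a e f k ha hk.
have sD : (size (al - be)%R <= N.+1)%N by apply: szB.
have sX : (size ('X + (2 : C)%:P)%R <= 2)%N.
  by apply: szD; [rewrite size_polyX | apply: leq_trans (size_polyC_leq1 _) _].
have sbc := size_mul_leq b c.
have sQ := size_mul_leq ('X + (2 : C)%:P) (b * c).
have sDD := size_mul_leq (al - be) (al - be).
have s2nd : (size (('X + (2 : C)%:P) * (b * c))%R <= 2 * N)%N by lia.
exists (4^-1 *: (al - be) ^+ 2 + ('X + 2%:P) * (b * c)); split.
- apply: szD; last by apply: leq_trans s2nd _.
  apply: szZ; rewrite expr2; lia.
- rewrite coefD coefZ (@cf0 C _ _ s2nd) addr0 expr2.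
  have -> : (2 * N = N + N)%N by lia.
  rewrite (@coefM_top C _ _ _ _ sD sD) coefB c1 c2; ring.
- move=> z hz hz2.
  rewrite /Qfun /tfun /Tmono -[X in _ *: X]/(@Mcore C N xi a e f k z) hM //.
  rewrite mxtraceZ detZ tr2 det2 F00 F01 F10 F11 /lam.
  rewrite !(hornerD, hornerN, hornerZ, hornerM, hornerX, hornerC).
  field; by rewrite hz subr_eq0 -expr2 hz2.
Qed.
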